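(* Let $I=\langle N,M,V\rangle$ be an ordered instance of chores, let $i\in N$, and let $k$ be the maximum number of bundles of cardinality one in any MMS partition of $i$. Then $i$ has an MMS partition in which each of the chores $1,2,\dots,\min(n-1,k)$ forms a bundle of cardinality one.
   Context: An instance of chores $I=\langle N,M,V\rangle$ has agents $N=\{1,\dots,n\}$, chores $M=\{1,\dots,m\}$ and additive valuations $v_i$ with $v_i(\emptyset)=0$, $v_i(S)=\sum_{g\in S}v_i(\{g\})$ and $v_{ij}:=v_i(\{j\})\le 0$. It is ordered if $v_{ij}\le v_{i(j+1)}$ for all $i$ and $1\le j<m$. An allocation ($n$-partition) is an ordered $n$-tuple of pairwise disjoint, possibly empty subsets of $M$ with union $M$. The maximin share of $i$ is $\mu_i=\max_A\min_j v_i(A_j)$ over all allocations; an MMS partition of $i$ is an allocation $A$ with $v_i(A_j)\ge\mu_i$ for all $j$. *)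

(* Defs.v *)
From mathcomp Require Import all_boot all_order all_algebra.
Set Implicit Arguments. Unset Strict Implicit. Unset Printing Implicit Defensive.
Import Order.TTheory GRing.Theory Num.Theory.
Local Open Scope ring_scope.

(* Agents are 'I_n (agent i+1 of the paper is i), chores are 'I_m
   (chore j+1 of the paper is j).  A valuation profile is v : 'I_n -> 'I_m -> R,
   v i j = v_{i(j+1)}; additivity is built in via bundle_val. *)

Section Chores.
Variables (R : realFieldType) (n m : nat).
Implicit Types (v : 'I_n -> 'I_m -> R) (A : 'I_n -> {set 'I_m}).

Definition bundle_val v (i : 'I_n) (S : {set 'I_m}) : R := \sum_(g in S) v i g.

Definition chores_instance v : Prop := forall i j, v i j <= 0.

Definition ordered_instance v : Prop :=
  forall i (j j' : 'I_m), nat_of_ord j' = (nat_of_ord j).+1 -> v i j <= v i j'.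

Definition is_allocation A : Prop :=
  (forall j k : 'I_n, j != k -> [disjoint A j & A k]) /\
  \bigcup_(j : 'I_n) A j = [set: 'I_m].

Definition is_maximin_share v (i : 'I_n) (mu : R) : Prop :=
  (exists A, is_allocation A /\ forall j, mu <= bundle_val v i (A j)) /\
  (forall A, is_allocation A -> exists j, bundle_val v i (A j) <= mu).

Definition is_MMS_partition v (i : 'I_n) A : Prop :=
  is_allocation A /\
  exists mu, is_maximin_share v i mu /\ forall j, mu <= bundle_val v i (A j).

Definition num_singletons A : nat := #|[set j : 'I_n | #|A j| == 1%N]|.

End Chores.

(* Main.v *)
Require Import Defs.
From mathcomp Require Import all_boot all_order all_algebra perm.
Set Implicit Arguments. Unset Strict Implicit. Unset Printing Implicit Defensive.
Import Order.TTheory GRing.Theory Num.Theory.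
Local Open Scope ring_scope.

Section L.
Variables (R : realFieldType) (n m : nat) (v : 'I_n -> 'I_m -> R) (i : 'I_n).

Lemma mono : ordered_instance v ->
  forall a b : 'I_m, (a <= b)%N -> v i a <= v i b.
Proof.
move=> Ho.
suff H : forall d (a b : 'I_m), val b = (val a + d)%N -> v i a <= v i b.
  by move=> a b ab; apply: (H (b - a)%N); rewrite subnKC.
elim=> [|d IH] a b E.
  by have -> : a = b by apply: val_inj; rewrite E addn0.
have lt : (a + d < m)%N by rewrite (leq_ltn_trans _ (ltn_ord b)) // E addnS.
apply: (le_trans (IH a (Ordinal lt) erefl)).
by apply: Ho => /=; rewrite E addnS.
Qed.

Lemma mu_le (A : 'I_n -> {set 'I_m}) mu : chores_instance v -> is_allocation A ->
  (forall l, mu <= bundle_val v i (A l)) -> forall j, mu <= v i j.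
Proof.
move=> Hc [_ HU] Hmu j.
have : j \in \bigcup_(l : 'I_n) A l by rewrite HU inE.
case/bigcupP=> l _ jA.
apply: (le_trans (Hmu l)); rewrite /bundle_val (bigD1 j) //=.
rewrite gerDl; apply: (big_ind (fun x => x <= 0)) => //; by move=> x y hx hy; rewrite -[0]addr0 lerD.
Qed.

Definition swapA (a b : 'I_m) (A : 'I_n -> {set 'I_m}) :=
  fun l => tperm a b @^-1: A l.

Lemma swap_alloc a b A : is_allocation A -> is_allocation (swapA a b A).
Proof.
move=> [HD HU]; split.
  move=> j k jk; rewrite -setI_eq0; apply/eqP/setP=> x; rewrite !inE.
  have := HD j k jk; rewrite -setI_eq0 => /eqP/setP/(_ (tperm a b x)).
  by rewrite !inE.
apply/setP=> x; rewrite inE.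
have : tperm a b x \in \bigcup_(l : 'I_n) A l by rewrite HU inE.
by case/bigcupP=> l _ H; apply/bigcupP; exists l => //; rewrite inE.
Qed.

Lemma swap_card a b A l : #|swapA a b A l| = #|A l|.
Proof. by rewrite /swapA card_preimset //; apply: (can_inj (tpermK a b)). Qed.

Lemma swap_num a b A : num_singletons (swapA a b A) = num_singletons A.
Proof.
by rewrite /num_singletons; apply: eq_card => l; rewrite !inE swap_card.
Qed.

Lemma swap_single a b A l (j : 'I_m) : A l = [set j] ->
  swapA a b A l = [set tperm a b j].
Proof.
move=> E; apply/setP=> x; rewrite /swapA E !inE.
by rewrite (canF_eq (tpermK a b)).
Qed.

Lemma swap_val a b A l : bundle_val v i (swapA a b A l) =
  \sum_(x in A l) v i (tperm a b x).
Proof.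
rewrite /bundle_val (reindex_inj (can_inj (tpermK a b))) /=.
by apply: eq_bigl => x; rewrite /swapA !inE tpermK.
Qed.

End L.

Theorem lemma18 (R : realFieldType) (n m : nat) (v : 'I_n -> 'I_m -> R)
    (i : 'I_n) (k : nat) :
  (0 < n)%N ->
  chores_instance v -> ordered_instance v ->
  (exists A, is_MMS_partition v i A /\ num_singletons A = k) ->
  (forall A, is_MMS_partition v i A -> (num_singletons A <= k)%N) ->
  exists A, is_MMS_partition v i A /\
    forall j : 'I_m, (nat_of_ord j < minn n.-1 k)%N ->
      exists l : 'I_n, A l = [set j].
Proof.
move=> n0 Hc Ho [A0 [HA0 Hk]] Hmax.
suff H : forall s, (s <= minn n.-1 k)%N -> exists A, is_MMS_partition v i A /\
   num_singletons A = k /\ forall j : 'I_m, (j < s)%N -> exists l, A l = [set j].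
  by case: (H _ (leqnn _)) => A [? [_ ?]]; exists A.
elim=> [|s IH] st.
  by exists A0; split => //; split => // j.
have [A [HA [HkA Hs]]] := IH (ltnW st).
have sk : (s < k)%N by apply: leq_trans st (geq_minr _ _).
case: (ltnP s m) => sm; last first.
  exists A; split => //; split => // j jl; apply: Hs.
  exact: leq_trans (ltn_ord j) sm.
set a : 'I_m := Ordinal sm.
case: (boolP [exists l, A l == [set a]]).
  case/existsP => l /eqP Hl; exists A; split => //; split => // j.
  rewrite ltnS leq_eqVlt => /orP [/eqP js | js]; last exact: Hs.
  by exists l; rewrite Hl; congr [set _]; apply: val_inj.
move=> Hna.
have [[Hall HD] [mu [Hmu Hb]]] := (HA.1, HA.2).
case: (boolP [exists l, exists b : 'I_m, (A l == [set b]) && (s < b)%N]).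
  case/existsP=> p /existsP [b /andP [/eqP Hp sb]].
  have ab : a != b by apply/eqP => E; move: sb; rewrite -E /= ltnn.
  exists (swapA a b A); split; last split.
  - split; first exact: swap_alloc.
    exists mu; split => // l.
    case: (eqVneq l p) => [-> | lp].
      rewrite (swap_single _ _ Hp) tpermR /bundle_val big_set1.
      exact: mu_le Hc (conj Hall HD) Hb a.
    rewrite swap_val; apply: le_trans (Hb l) _; apply: ler_sum => x xA.
    case: tpermP => [-> | xb | _ _ //].
      by apply: mono => //=; apply: ltnW.
    have := Hall _ _ lp; move/disjointFr/(_ xA).
    by rewrite Hp xb inE eqxx.
  - by rewrite swap_num.
  - move=> j; rewrite ltnS leq_eqVlt => /orP [/eqP js | js].
      have -> : j = a by apply: val_inj.
      by exists p; rewrite (swap_single _ _ Hp) tpermR.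
    have [l Hl] := Hs j js.
    exists l; rewrite (swap_single _ _ Hl) tpermD //.
      by apply/eqP => E; move: js; rewrite -E /= ltnn.
    by apply/eqP => E; move: (ltn_trans js sb); rewrite -E ltnn.
move=> Hnb; exfalso.
pose S := [set l | #|A l| == 1%N].
pose g l := odflt a [pick x in A l].
have gS : forall l, l \in S -> A l = [set g l].
  move=> l; rewrite inE => /cards1P [x Hx]; rewrite /g Hx.
  case: pickP => [y | none]; first by rewrite inE => /eqP ->.
  by have := none x; rewrite inE eqxx.
have glt : forall l, l \in S -> (g l < s)%N.
  move=> l lS; rewrite ltnNge leq_eqVlt negb_or; apply/andP; split.
    apply/negP => /eqP E; move/negP: Hna; apply; apply/existsP; exists l.
    by rewrite gS //; apply/eqP; congr [set _]; apply: val_inj.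
  apply/negP => E; move/negP: Hnb; apply; apply/existsP; exists l.
  by apply/existsP; exists (g l); rewrite gS // eqxx.
have inj : {in enum S &, injective (fun l => val (g l))}.
  move=> l l'; rewrite !mem_enum => lS l'S /val_inj E.
  apply/eqP; apply/negP => /negP ll'.
  have gA : g l \in A l by rewrite (gS l lS) inE.
  have := Hall _ _ ll'; move/disjointFr/(_ gA).
  by rewrite (gS l' l'S) E inE eqxx.
have := uniq_leq_size (s1 := [seq val (g l) | l <- enum S]) (s2 := iota 0 s).
rewrite map_inj_in_uniq // enum_uniq size_map size_iota -cardE.
have -> : #|S| = k by rewrite -HkA.
move=> H; have : (k <= s)%N.
  apply: H => //; move=> x /mapP [l lS ->]; rewrite mem_iota /=.
  by apply: glt; rewrite -mem_enum.
by rewrite leqNgt sk.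
Qed.
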